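(* Let $P$ be a continuous poset and $(T_\varepsilon)_{\varepsilon\ge0}$ a superlinear family of Scott-continuous translations satisfying TR1, TR2 and TR3. Then (i) for a persistence module $M$ over $P$, $d_a(M,0)=0$ iff $M$ is ephemeral; (ii) for a Scott sheaf $\mathcal F$ on $P^\sigma$, $d_\sigma(\mathcal F,0)=0$ iff $\mathcal F=0$.
   Context: Let $P$ be a poset (as a category, $p\to q$ iff $p\le q$). A subset is directed if nonempty and any two elements have an upper bound in it. $x\ll y$ means: for every directed $D$ whose supremum exists with $y\le\sup D$, some $d\in D$ satisfies $x\le d$. $P$ is continuous if for each $p$ the set $\{x:x\ll p\}$ is directed with supremum $p$. $U$ is Scott-open if it is an up-set meeting every directed set whose supremum exists and lies in $U$; $P^\sigma$ is $P$ with this topology. A map $f\colon P\to P$ is Scott-continuous if order-preserving and $f(\sup D)=\sup f(D)$ for directed $D$ with existing supremum. A translation is an order-preserving $T$ with $p\le T(p)$; a family $(T_\varepsilon)_{\varepsilon\ge0}$ is superlinear if $T_\varepsilon(T_\delta(p))\le T_{\varepsilon+\delta}(p)$. TR1: each $T_\varepsilon$ is an order-isomorphism. TR2: $x\ll T_\varepsilon(x)$ for all $x$ and $\varepsilon>0$. TR3: for every $p\ll q$ there is $\varepsilon>0$ with $p\le T_\varepsilon(p)\le q$. $k$ is a commutative ring with unity; persistence modules are functors from $P$ to $k$-modules; Scott sheaves are sheaves of $k$-modules on $P^\sigma$. For a persistence module, $T^*M=M\circ T$ with natural morphism $M\to T^*M$ given by $M(p\le T(p))$; for a Scott sheaf,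 $T^*\mathcal F$ is the sheaf inverse image along $T\colon P^\sigma\to P^\sigma$, with natural morphism $\mathcal F\to T^*\mathcal F$ induced on stalks by $\mathcal F_p\to\mathcal F_{T(p)}$. Objects $A,B$ are $\varepsilon$-interleaved if there are morphisms $f\colon A\to T_\varepsilon^*B$, $g\colon B\to T_\varepsilon^*A$ with $T_\varepsilon^*(g)\circ f$ and $T_\varepsilon^*(f)\circ g$ equal to the natural morphisms $A\to T_\varepsilon^*T_\varepsilon^*A$, $B\to T_\varepsilon^*T_\varepsilon^*B$. The interleaving distance is the infimum of such $\varepsilon$ ($\infty$ if none): $d_a$ for persistence modules, $d_\sigma$ for Scott sheaves. $M$ is ephemeral if $M(p\le q)=0$ for all $p\ll q$. *)

(* Defs.v *)
From HB Require Import structures.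
From mathcomp Require Import all_boot all_order all_algebra.
From mathcomp Require Import boolp classical_sets functions reals constructive_ereal ereal.
Set Implicit Arguments. Unset Strict Implicit. Unset Printing Implicit Defensive.
Import Order.TTheory GRing.Theory Num.Theory.
Local Open Scope classical_set_scope.
Local Open Scope order_scope.

Section Order_defs.
Context {d : Order.disp_t} {P : porderType d}.

Definition directed (D : set P) : Prop :=
  (exists x, D x) /\ forall x y, D x -> D y -> exists z, D z /\ x <= z /\ y <= z.

Definition is_sup (D : set P) (s : P) : Prop :=
  (forall x, D x -> x <= s) /\ (forall u, (forall x, D x -> x <= u) -> s <= u).

Definition way_below (x y : P) : Prop :=
  forall (D : set P) (s : P), directed D -> is_sup D s -> y <= s ->
    exists2 z, D z & x <= z.

Definition continuous_poset : Prop :=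
  forall p : P, directed [set x | way_below x p] /\ is_sup [set x | way_below x p] p.

Definition scott_open (U : set P) : Prop :=
  (forall p q, U p -> p <= q -> U q) /\
  (forall (D : set P) (s : P), directed D -> is_sup D s -> U s -> exists2 z, D z & U z).

Definition scott_continuous (f : P -> P) : Prop :=
  (forall p q, p <= q -> f p <= f q) /\
  (forall (D : set P) (s : P), directed D -> is_sup D s -> is_sup (f @` D) (f s)).

Definition order_iso (f : P -> P) : Prop :=
  (forall p q, (f p <= f q) <-> (p <= q)) /\ (forall q, exists p, f p = q).

End Order_defs.
Arguments continuous_poset {d} P.

Record translation {d : Order.disp_t} (P : porderType d) := Translation {
  tr :> P -> P;
  tr_mono : forall p q, p <= q -> tr p <= tr q;
  tr_ext : forall p, p <= tr p }.

Unset Implicit Arguments.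

Section Family.
Context {R : realType} {d : Order.disp_t} {P : porderType d}.
Variable T : R -> translation P.

Definition superlinear : Prop :=
  forall (e f : R) (p : P), (0 <= e)%R -> (0 <= f)%R -> T e (T f p) <= T (e + f)%R p.
Definition TR1 : Prop := forall e : R, (0 <= e)%R -> order_iso (T e).
Definition TR2 : Prop := forall (e : R) (x : P), (0 < e)%R -> way_below x (T e x).
Definition TR3 : Prop := forall p q : P, way_below p q ->
  exists e : R, (0 < e)%R /\ p <= T e p /\ T e p <= q.
End Family.

Record pmod (k : comPzRingType) {d : Order.disp_t} (P : porderType d) := PMod {
  pm_obj : P -> lmodType k;
  pm_map : forall p q : P, p <= q -> pm_obj p -> pm_obj q;
  pm_lin : forall p q (h : p <= q) (a : k) (x y : pm_obj p),
      pm_map p q h (a *: x + y)%R = (a *: pm_map p q h x + pm_map p q h y)%R;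
  pm_id : forall p (h : p <= p) x, pm_map p p h x = x;
  pm_comp : forall p q r (h1 : p <= q) (h2 : q <= r) (h3 : p <= r) x,
      pm_map p r h3 x = pm_map q r h2 (pm_map p q h1 x) }.
Arguments pm_obj {k d P} _ _.
Arguments pm_map {k d P} _ {p q} _ _.

Section PMod.
Context {k : comPzRingType} {d : Order.disp_t} {P : porderType d}.

Definition pzero : pmod k P.
Proof.
refine (@PMod k d P (fun _ => ('rV[k]_0 : lmodType k)) (fun _ _ _ x => x) _ _ _);
  by [].
Defined.

(** f : M -> T^* N, i.e. components M p -> N (T p), linear and natural *)
Definition is_shift_hom (T : translation P) (M N : pmod k P)
  (f : forall p, pm_obj M p -> pm_obj N (T p)) : Prop :=
  (forall p (a : k) (x y : pm_obj M p), f p (a *: x + y)%R = (a *: f p x + f p y)%R) /\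
  (forall p q (h : p <= q) (h' : T p <= T q) x,
      pm_map N h' (f p x) = f q (pm_map M h x)).

Definition pm_interleaved (T : translation P) (M N : pmod k P) : Prop :=
  exists (f : forall p, pm_obj M p -> pm_obj N (T p))
         (g : forall p, pm_obj N p -> pm_obj M (T p)),
    is_shift_hom T M N f /\ is_shift_hom T N M g /\
    (forall p (h : p <= T (T p)) x, g (T p) (f p x) = pm_map M h x) /\
    (forall p (h : p <= T (T p)) x, f (T p) (g p x) = pm_map N h x).

Definition d_a {R : realType} (T : R -> translation P) (M N : pmod k P) : \bar R :=
  ereal_inf [set (e%:E)%E | e in [set e : R | (0 <= e)%R /\ pm_interleaved (T e) M N]].

Definition ephemeral (M : pmod k P) : Prop :=
  forall p q (h : p <= q), way_below p q -> forall x, pm_map M h x = 0%R.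
End PMod.

Record scott_sheaf (k : comPzRingType) {d : Order.disp_t} (P : porderType d) := SSheaf {
  sh_obj : set P -> lmodType k;
  sh_res : forall U V : set P, V `<=` U -> sh_obj U -> sh_obj V;
  sh_lin : forall U V (h : V `<=` U) (a : k) (x y : sh_obj U),
      scott_open U -> scott_open V ->
      sh_res U V h (a *: x + y)%R = (a *: sh_res U V h x + sh_res U V h y)%R;
  sh_id : forall U (h : U `<=` U) x, scott_open U -> sh_res U U h x = x;
  sh_comp : forall U V W (h1 : V `<=` U) (h2 : W `<=` V) (h3 : W `<=` U) x,
      scott_open U -> scott_open V -> scott_open W ->
      sh_res U W h3 x = sh_res V W h2 (sh_res U V h1 x);
  sh_locality : forall (I : Type) (Ui : I -> set P) (U : set P)
      (h : forall i, Ui i `<=` U),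
      scott_open U -> (forall i, scott_open (Ui i)) -> U = \bigcup_i Ui i ->
      forall s t : sh_obj U, (forall i, sh_res U (Ui i) (h i) s = sh_res U (Ui i) (h i) t) -> s = t;
  sh_gluing : forall (I : Type) (Ui : I -> set P) (U : set P)
      (h : forall i, Ui i `<=` U),
      scott_open U -> (forall i, scott_open (Ui i)) -> U = \bigcup_i Ui i ->
      forall s : forall i, sh_obj (Ui i),
      (forall i j (hi : Ui i `&` Ui j `<=` Ui i) (hj : Ui i `&` Ui j `<=` Ui j),
          sh_res (Ui i) (Ui i `&` Ui j) hi (s i) = sh_res (Ui j) (Ui i `&` Ui j) hj (s j)) ->
      exists t : sh_obj U, forall i, sh_res U (Ui i) (h i) t = s i }.
Arguments sh_obj {k d P} _ _.
Arguments sh_res {k d P} _ {U V} _ _.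

Section Sheaf.
Context {k : comPzRingType} {d : Order.disp_t} {P : porderType d}.

Definition szero : scott_sheaf k P.
Proof.
refine (@SSheaf k d P (fun _ => ('rV[k]_0 : lmodType k)) (fun _ _ _ x => x)
          _ _ _ _ _) => //.
- by move=> *; apply/rowP => -[].
- by move=> *; exists 0%R => i; apply/rowP => -[].
Defined.

(** f : A -> T^* B.  Since T is an order isomorphism (TR1), hence a
    homeomorphism of P^sigma, (T^* B)(U) = B(T(U)). *)
Definition is_sshift_hom (T : translation P) (A B : scott_sheaf k P)
  (f : forall U : set P, sh_obj A U -> sh_obj B (T @` U)) : Prop :=
  (forall U (a : k) (x y : sh_obj A U), scott_open U ->
      f U (a *: x + y)%R = (a *: f U x + f U y)%R) /\
  (forall U V (h : V `<=` U) (h' : T @` V `<=` T @` U) x,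
      scott_open U -> scott_open V ->
      sh_res B h' (f U x) = f V (sh_res A h x)).

Definition sh_interleaved (T : translation P) (A B : scott_sheaf k P) : Prop :=
  exists (f : forall U : set P, sh_obj A U -> sh_obj B (T @` U))
         (g : forall U : set P, sh_obj B U -> sh_obj A (T @` U)),
    is_sshift_hom T A B f /\ is_sshift_hom T B A g /\
    (forall U (h : T @` (T @` U) `<=` U) x, scott_open U ->
        g (T @` U) (f U x) = sh_res A h x) /\
    (forall U (h : T @` (T @` U) `<=` U) x, scott_open U ->
        f (T @` U) (g U x) = sh_res B h x).

Definition d_sigma {R : realType} (T : R -> translation P) (A B : scott_sheaf k P)
  : \bar R :=
  ereal_inf [set (e%:E)%E | e in [set e : R | (0 <= e)%R /\ sh_interleaved (T e) A B]].

Definition sheaf_is_zero (F : scott_sheaf k P) : Prop :=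
  forall U, scott_open U -> forall x : sh_obj F U, x = 0%R.
End Sheaf.

(* Main.v *)
Require Import Defs.
From HB Require Import structures.
From mathcomp Require Import all_boot all_order all_algebra.
From mathcomp Require Import boolp classical_sets functions reals constructive_ereal ereal.
Import Order.TTheory GRing.Theory Num.Theory.
Local Open Scope classical_set_scope.

Section Helpers.
Context {d : Order.disp_t} {P : porderType d}.

Lemma wb_mono (x y z : P) : way_below x y -> (y <= z)%O -> way_below x z.
Proof.
move=> H yz D s dD sD zs; apply: (H D s dD sD); exact: le_trans yz zs.
Qed.

Lemma iso_open (f : P -> P) (U : set P) : order_iso f -> scott_open U ->
  scott_open (f @` U).
Proof.
move=> [fle fsurj] [Uup Udir]; split.
  move=> _ q [u Uu <-]; have [v <-] := fsurj q => le.
  exists v => //; apply: Uup Uu _; exact: (proj1 (fle _ _) le).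
move=> D s [[z Dz] dD] [sub sl] [u Uu fus].
have D'dir : directed [set x | D (f x)].
  split; first by have [w fw] := fsurj z; exists w; rewrite /= fw.
  move=> x y Dx Dy; have [z' [Dz' [xz yz]]] := dD _ _ Dx Dy.
  have [w fw] := fsurj z'; exists w; rewrite /= fw; split => //.
  by split; apply/fle; rewrite fw.
have D'sup : is_sup [set x | D (f x)] u.
  split; first by move=> x Dx; apply/fle; rewrite fus; exact: sub.
  move=> v ub; apply/fle; rewrite fus; apply: sl => z' Dz'.
  have [w fw] := fsurj z'; rewrite -fw; apply/fle; apply: ub; by rewrite /= fw.
have [w Dw Uw] := Udir _ _ D'dir D'sup Uu.
by exists (f w) => //; exists w.
Qed.
End Helpers.

Section Fam.
Context {R : realType} {d : Order.disp_t} {P : porderType d}.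
Variable T : R -> translation P.

Lemma T_monoe (a b : R) (p : P) : superlinear T -> (0 <= a)%R -> (a <= b)%R ->
  (T a p <= T b p)%O.
Proof.
move=> sl a0 ab.
have h := sl (b - a)%R a p; rewrite subrK in h.
apply: le_trans (h _ a0); last by rewrite subr_ge0.
exact: tr_ext.
Qed.
End Fam.

Lemma pm_map0 {k : comPzRingType} {d} {P : porderType d} (M : pmod k P) p q
  (h : (p <= q)%O) : pm_map M h 0%R = 0%R.
Proof.
by have := pm_lin _ _ M _ _ h (-1)%R 0%R 0%R; rewrite scaler0 addr0 scaleN1r addNr.
Qed.

Theorem mainTheorem20 (R : realType) (k : comPzRingType) (d : Order.disp_t)
  (P : porderType d) (T : R -> translation P) :
  continuous_poset P ->
  superlinear T ->
  (forall e : R, (0 <= e)%R -> scott_continuous (T e)) ->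
  TR1 T -> TR2 T -> TR3 T ->
  (forall M : pmod k P, d_a T M pzero = 0%E <-> ephemeral M) /\
  (forall F : scott_sheaf k P, d_sigma T F szero = 0%E <-> sheaf_is_zero F).
Proof.
move=> cP sl _ tr1 tr2 tr3.
have small : forall (Q : R -> Prop) (eps : R), (0 < eps)%R ->
    ereal_inf [set (e%:E)%E | e in [set e : R | (0 <= e)%R /\ Q e]] = 0%E ->
    exists e, [/\ (0 <= e)%R, Q e & (e < eps)%R].
  move=> Q eps eps0 H.
  have : (ereal_inf [set (e%:E)%E | e in [set e : R | (0 <= e)%R /\ Q e]]
           < eps%:E)%E by rewrite H lte_fin.
  by move=> /ereal_inf_lt [_ [e [e0 Qe] <-]]; rewrite lte_fin => lt; exists e.
split.
- move=> M; split.
  + move=> H p q h wb x.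
    have [eps [eps0 [_ Tq]]] := tr3 _ _ wb.
    have [e [e0 [f [g [_ [[glin _] [fg _]]]]] lte]] := small _ (eps / 2)%R
      ltac:(by rewrite divr_gt0) H.
    have h1 : (p <= T e (T e p))%O.
      by apply: le_trans (tr_ext _ _) (tr_ext _ _).
    have h2 : (T e (T e p) <= q)%O.
      apply: le_trans (sl _ _ _ e0 e0) _; apply: le_trans Tq.
      apply: (@T_monoe _ _ _ T _ _ _ sl) => //; first by rewrite addr_ge0.
      by apply/ltW; rewrite (splitr eps); exact: ltrD.
    rewrite (pm_comp _ _ M _ _ _ h1 h2 h x) -(fg p h1 x).
    have -> : f p x = 0%R by apply/rowP => -[].
    have := glin (T e p) (-1)%R 0%R 0%R; rewrite scaler0 addr0 scaleN1r addNr.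
    by move=> ->; rewrite pm_map0.
  + move=> eph; apply/eqP; rewrite eq_le; apply/andP; split.
      apply/lee_addgt0Pr => e e0; rewrite add0e; apply: ereal_inf_lbound.
      exists e => //; split; first exact: ltW.
      exists (fun p _ => 0%R), (fun p _ => 0%R).
      split; first by split => *; apply/rowP => -[].
      split; first by split => *; [rewrite scaler0 addr0 | rewrite pm_map0].
      split; last by move=> *; apply/rowP => -[].
      move=> p h x; apply/esym/eph.
      apply: wb_mono (tr2 _ p e0) (tr_ext _ _).
    apply: le_ereal_inf_tmp => _ [e [e0 _] <-]; by rewrite lee_fin.
- move=> F; split.
  + move=> H U Uo x.
    pose I := {e : R | (0 <= e)%R /\ sh_interleaved (T e) F szero}.
    pose Ui (i : I) := T (sval i) @` (T (sval i) @` U).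
    have Uup := Uo.1.
    have hsub : forall i, Ui i `<=` U.
      move=> i _ [_ [u Uu <-] <-]; apply: Uup (Uup _ _ Uu (tr_ext _ _)) (tr_ext _ _).
    have Uio : forall i, scott_open (Ui i).
      move=> [e [e0 ie]]; do 2 apply: iso_open (tr1 _ e0) _ => //.
    have Ucov : U = \bigcup_i Ui i.
      apply/seteqP; split; last by move=> p [i _]; apply: hsub.
      move=> p Up.
      have [cd cs] := cP p.
      have [z wz Uz] := Uo.2 _ _ cd cs Up.
      have [eps [eps0 [_ Tz]]] := tr3 _ _ wz.
      have [e [e0 ie lte]] := small _ (eps / 2)%R ltac:(by rewrite divr_gt0) H.
      have le1 : (T e (T e z) <= p)%O.
        apply: le_trans (sl _ _ _ e0 e0) _; apply: le_trans Tz.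
        apply: (@T_monoe _ _ _ T _ _ _ sl) => //; first by rewrite addr_ge0.
        by apply/ltW; rewrite (splitr eps); exact: ltrD.
      have [fle1 fs1] := tr1 _ e0.
      have [p1 Tp1] := fs1 p; have [u Tu] := fs1 p1.
      exists (exist _ e (conj e0 ie)) => //=.
      exists p1; last exact: Tp1.
      exists u => //; apply: Uup Uz _.
      apply/(fle1 z u)/(fle1 (T e z) (T e u)); by rewrite Tu Tp1.
    have := sh_locality _ _ F _ _ _ hsub Uo Uio Ucov x 0%R.
    apply => -[e [e0 ie]].
    have TUo : scott_open (T e @` U) by apply: iso_open (tr1 _ e0) _.
    have TTUo : scott_open (T e @` (T e @` U)) by apply: iso_open (tr1 _ e0) _.
    have [f [g [_ [[glin _] [fg _]]]]] := ie.
    set i := exist _ e (conj e0 ie).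
    have g0 : g (T e @` U) 0%R = 0%R.
      have := glin (T e @` U) (-1)%R 0%R 0%R TUo.
      by rewrite scaler0 addr0 scaleN1r addNr.
    have r0 : sh_res F (hsub i) 0%R = 0%R.
      have := sh_lin _ _ F _ _ (hsub i) (-1)%R 0%R 0%R Uo TTUo.
      by rewrite scaler0 addr0 scaleN1r addNr.
    have fx0 : f U x = 0%R by apply/rowP => -[].
    move: (fg U (hsub i) x Uo); rewrite fx0 g0 => <-.
    exact/esym.
  + move=> Fz; apply/eqP; rewrite eq_le; apply/andP; split.
      apply: ereal_inf_lbound; exists 0%R => //; split => //.
      exists (fun U _ => 0%R), (fun U _ => 0%R).
      split; first by split => *; apply/rowP => -[].
      split.
        split => U *; first by rewrite scaler0 addr0.
        apply: Fz; apply: iso_open (tr1 _ (lexx _)) _ => //.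
      split; last by move=> *; apply/rowP => -[].
      move=> U h x Uo; apply/esym/Fz.
      by do 2 apply: iso_open (tr1 _ (lexx _)) _ => //.
    apply: le_ereal_inf_tmp => _ [e [e0 _] <-]; by rewrite lee_fin.
Qed.
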